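(* Let $G$ be the subgroup of $\mathrm{PSL}_2(\mathbb{Z})$ freely generated by $S_0$, $S_1$ (of order $2$) and $R_2$ (of order $3$) as in the context, with characters $\alpha_0$, $\chi$. Up to isomorphism of representations, the nonsplit indecomposable rank $2$ representations $\rho$ of $G$ containing a copy of the trivial representation (i.e. nonsplit extensions $0\to1\to\rho\to\phi\to0$ of a character $\phi$ by the trivial character) are exactly the following: (1) a single extension $0\to1\to\rho\to\chi^3\to0$, given by $\rho(S_0)=\begin{pmatrix}1&1\\0&-1\end{pmatrix}$, $\rho(S_1)=\begin{pmatrix}1&0\\0&-1\end{pmatrix}$, $\rho(R_2)=\begin{pmatrix}1&0\\0&1\end{pmatrix}$; (2) for each $a\in\{1,5\}$, an infinite family of pairwise nonisomorphic representations parameterized by $\mathbb{P}^1$, arising from extensions $0\to1\to\rho\to\chi^{-a}\to0$, given for $z\in\mathbb{C}$ by $\rho(S_0)=\begin{pmatrix}1&1\\0&-1\end{pmatrix}$, $\rho(S_1)=\begin{pmatrix}1&z\\0&-1\end{pmatrix}$, $\rho(R_2)=\begin{pmatrix}1&0\\0&\zeta^a\end{pmatrix}$, and for $z=\infty$ by $\rho(S_0)=\begin{pmatrix}1&0\\0&-1\end{pmatrix}$, $\rho(S_1)=\begin{pmatrix}1&1\\0&-1\end{pmatrix}$, $\rho(R_2)=\begin{pmatrix}1&0\\0&\zeta^a\end{pmatrix}$; (3) for each $a\in\{2,4\}$, one extension $0\to1\to\rho\to\alpha_0\chi^{-a}\to0$, given by $\rho(S_0)=\begin{pmatrix}1&1\\0&-1\end{pmatrix}$,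 $\rho(S_1)=\begin{pmatrix}1&0\\0&1\end{pmatrix}$, $\rho(R_2)=\begin{pmatrix}1&0\\0&\zeta^a\end{pmatrix}$; (4) for each $a\in\{1,5\}$, one extension $0\to1\to\rho\to\alpha_0\chi^{-a}\to0$, given by $\rho(S_0)=\begin{pmatrix}1&0\\0&1\end{pmatrix}$, $\rho(S_1)=\begin{pmatrix}1&1\\0&-1\end{pmatrix}$, $\rho(R_2)=\begin{pmatrix}1&0\\0&\zeta^a\end{pmatrix}$.
   Context: Let $T=\begin{pmatrix}1&1\\0&1\end{pmatrix}$, $S=\begin{pmatrix}0&-1\\1&0\end{pmatrix}$, $R=ST$ in $\mathrm{PSL}_2(\mathbb{Z})$, and $\zeta=e^{2\pi i/3}$. $G$ is the index-$4$ subgroup of $\mathrm{PSL}_2(\mathbb{Z})$ generated by the principal congruence subgroup $\Gamma(4)$ together with $S$ and $\begin{pmatrix}1&1\\1&2\end{pmatrix}$; it is freely generated by $S_0=S$, $S_1=T^3ST^{-3}$ and $R_2=T^2RT^{-2}=T^2ST^{-1}$, with $S_0^2=S_1^2=R_2^3=1$. Characters of $G$: $\alpha_0(S_0)=-1$, $\alpha_0(S_1)=\alpha_0(R_2)=1$; $\alpha_1(S_1)=-1$, $\alpha_1(S_0)=\alpha_1(R_2)=1$; $\alpha_2(R_2)=\zeta$, $\alpha_2(S_0)=\alpha_2(S_1)=1$. $\chi$ is the restriction to $G$ of the character of $\mathrm{PSL}_2(\mathbb{Z})$ with $\chi(T)=e^{2\pi i/6}$ (so $\chi(S)=-1$, $\chi(R)=\zeta^2$);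 on $G$, $\chi=\alpha_0\alpha_1\alpha_2^2$. $1$ denotes the trivial character. Matrices are written in a basis whose first vector spans the trivial subrepresentation. *)

(* Defs.v *)
From HB Require Import structures.
From mathcomp Require Import all_boot all_order all_algebra.
From mathcomp Require Import reals.
From mathcomp Require Import complex.
Set Implicit Arguments. Unset Strict Implicit. Unset Printing Implicit Defensive.
Import Order.TTheory GRing.Theory Num.Theory.
Local Open Scope ring_scope.
Local Open Scope complex_scope.

Inductive gen := S0 | S1 | R2.

Section Defs.
Variable R : realType.
Local Notation C := R[i].

(* zeta = e^{2 pi i / 3} = -1/2 + i sqrt(3)/2 *)
Definition zeta : C := Complex (- (1 / 2)) (Num.sqrt 3 / 2).

(* A rank-2 complex representation of G is determined by the images of the
   free generators, subject exactly to S_0^2 = S_1^2 = R_2^3 = 1. Matrices act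
   on column vectors. *)
Definition is_rep2 (rho : gen -> 'M[C]_2) : Prop :=
  rho S0 ^+ 2 = 1 /\ rho S1 ^+ 2 = 1 /\ rho R2 ^+ 3 = 1.

Definition rep_iso (rho rho' : gen -> 'M[C]_2) : Prop :=
  exists P : 'M[C]_2, P \in unitmx /\ forall g, P *m rho g = rho' g *m P.

Definition has_trivial (rho : gen -> 'M[C]_2) : Prop :=
  exists v : 'cV[C]_2, v != 0 /\ forall g, rho g *m v = v.

(* rank 2: decomposable = isomorphic to a direct sum of two 1-dim reps *)
Definition decomposable (rho : gen -> 'M[C]_2) : Prop :=
  exists P : 'M[C]_2, P \in unitmx /\
    forall g, is_diag_mx (invmx P *m rho g *m P).

Definition indecomposable rho := ~ decomposable rho.

Definition alpha0 (g : gen) : C := match g with S0 => -1 | S1 => 1 | R2 => 1 end.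
Definition alpha1 (g : gen) : C := match g with S0 => 1 | S1 => -1 | R2 => 1 end.
Definition alpha2 (g : gen) : C := match g with S0 => 1 | S1 => 1 | R2 => zeta end.
Definition chi (g : gen) : C := alpha0 g * alpha1 g * alpha2 g ^+ 2.

Definition mx2 (a b c d : C) : 'M[C]_2 :=
  \matrix_(i, j) if i == ord0 then (if j == ord0 then a else b)
                 else (if j == ord0 then c else d).

Definition rep_of (A B D : 'M[C]_2) : gen -> 'M[C]_2 :=
  fun g => match g with S0 => A | S1 => B | R2 => D end.

(* Index of the list: Ext2 a (Some z) is z in C, Ext2 a None is z = infinity *)
Inductive ext_idx :=
  | Ext1
  | Ext2 of nat & option C
  | Ext3 of nat
  | Ext4 of nat.

Definition valid_idx (i : ext_idx) : Prop :=
  match i with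
  | Ext1 => True
  | Ext2 a _ => a = 1%N \/ a = 5%N
  | Ext3 a => a = 2%N \/ a = 4%N
  | Ext4 a => a = 1%N \/ a = 5%N
  end.

Definition listed (i : ext_idx) : gen -> 'M[C]_2 :=
  match i with
  | Ext1 => rep_of (mx2 1 1 0 (-1)) (mx2 1 0 0 (-1)) (mx2 1 0 0 1)
  | Ext2 a (Some z) =>
      rep_of (mx2 1 1 0 (-1)) (mx2 1 z 0 (-1)) (mx2 1 0 0 (zeta ^+ a))
  | Ext2 a None =>
      rep_of (mx2 1 0 0 (-1)) (mx2 1 1 0 (-1)) (mx2 1 0 0 (zeta ^+ a))
  | Ext3 a => rep_of (mx2 1 1 0 (-1)) (mx2 1 0 0 1) (mx2 1 0 0 (zeta ^+ a))
  | Ext4 a => rep_of (mx2 1 0 0 1) (mx2 1 1 0 (-1)) (mx2 1 0 0 (zeta ^+ a))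
  end.

Definition quot_char (i : ext_idx) (g : gen) : C :=
  match i with
  | Ext1 => chi g ^+ 3
  | Ext2 a _ => (chi g)^-1 ^+ a
  | Ext3 a => alpha0 g * (chi g)^-1 ^+ a
  | Ext4 a => alpha0 g * (chi g)^-1 ^+ a
  end.

End Defs.

(* Main.v *)
Require Import Defs.
From HB Require Import structures.
From mathcomp Require Import all_boot all_order all_algebra.
From mathcomp Require Import reals complex ring.
Import Order.TTheory GRing.Theory Num.Theory.
Local Open Scope ring_scope.
Set Implicit Arguments. Unset Strict Implicit.

Section Basics.
Variable R : realType.
Local Notation C := R[i].
Local Notation z3 := (zeta R).

Lemma mx2E (a b c d : C) :
  (mx2 a b c d) 0 0 = a /\ (mx2 a b c d) 0 1 = b /\
  (mx2 a b c d) 1 0 = c /\ (mx2 a b c d) 1 1 = d.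
Proof. by rewrite !mxE. Qed.

Lemma mx2_eta (M : 'M[C]_2) : M = mx2 (M 0 0) (M 0 1) (M 1 0) (M 1 1).
Proof.
apply/matrixP => i j; rewrite !mxE.
case: i => [[|[|i]] Hi]; case: j => [[|[|j]] Hj] //=;
  by congr (M _ _); apply/val_inj.
Qed.

Lemma mx2_mul (a b c d a' b' c' d' : C) :
  mx2 a b c d *m mx2 a' b' c' d' =
  mx2 (a * a' + b * c') (a * b' + b * d') (c * a' + d * c') (c * b' + d * d').
Proof.
apply/matrixP => i j; rewrite !mxE !big_ord_recr big_ord0 /= !mxE /=.
case: i => [[|[|i]] Hi]; case: j => [[|[|j]] Hj] //=; by rewrite add0r.
Qed.

Lemma mx2_inj (a b c d a' b' c' d' : C) :
  mx2 a b c d = mx2 a' b' c' d' -> [/\ a = a', b = b', c = c' & d = d'].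
Proof.
move=> E; have := congr1 (fun M : 'M[C]_2 => (M 0 0, M 0 1, M 1 0, M 1 1)) E.
by rewrite /= !mxE /= => -[-> -> -> ->].
Qed.

Lemma mx2_det (a b c d : C) : \det (mx2 a b c d) = a * d - b * c.
Proof.
rewrite (expand_det_row _ 0) !big_ord_recr big_ord0 /= add0r.
rewrite /cofactor !mxE /=.
rewrite !det_mx11 !mxE /= expr0 expr1 !mul1r mulN1r mulrN.
by [].
Qed.

Lemma mx2_1 : (1%:M : 'M[C]_2) = mx2 1 0 0 1.
Proof. by apply/matrixP => i j; rewrite !mxE; case: i => [[|[|i]] Hi]; case: j => [[|[|j]] Hj]. Qed.

Lemma zeta_eq : z3 ^+ 2 + z3 + 1 = 0.
Proof.
rewrite /zeta expr2.
have s3 : Num.sqrt (3 : R) * Num.sqrt 3 = 3 by rewrite -expr2 sqr_sqrtr // ler0n.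
apply/eqP; rewrite eq_complex /=; apply/andP; split; apply/eqP.
- move: s3; set s := Num.sqrt 3 => s3.
  transitivity ((3 - s * s) / 4); first by field.
  by rewrite s3 subrr mul0r.
- by field.
Qed.


Lemma z3_3 : z3 ^+ 3 = 1.
Proof.
have : z3 ^+ 3 - 1 = (z3 - 1) * (z3 ^+ 2 + z3 + 1) by ring.
by rewrite zeta_eq mulr0 => /eqP; rewrite subr_eq0 => /eqP.
Qed.

Lemma two_neq0 : (2 : C) != 0.
Proof. by rewrite pnatr_eq0. Qed.
Lemma three_neq0 : (3 : C) != 0.
Proof. by rewrite pnatr_eq0. Qed.

Lemma z3_neq1 : (z3 == 1) = false.
Proof.
apply/negbTE/eqP => E; move: zeta_eq; rewrite E expr1n.
have -> : (1 + 1 + 1 : C) = 3 by ring.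
exact/eqP/three_neq0.
Qed.

Lemma z3_neq0 : z3 != 0.
Proof. apply/eqP=> E; move: z3_3; rewrite E expr0n /= => /eqP; by rewrite eq_sym oner_eq0. Qed.

Lemma z3_4 : z3 ^+ 4 = z3.
Proof. by rewrite exprS z3_3 mulr1. Qed.
Lemma z3_5 : z3 ^+ 5 = z3 ^+ 2.
Proof. by rewrite (exprD _ 3 2) z3_3 mul1r. Qed.

Lemma z32_neq1 : (z3 ^+ 2 == 1) = false.
Proof.
apply/negbTE/eqP => E; move: z3_3; rewrite exprS E mulr1 => /eqP; by rewrite z3_neq1.
Qed.

Lemma z3_neq_z32 : (z3 == z3 ^+ 2) = false.
Proof.
apply/negbTE/eqP => E.
have : z3 * (z3 - 1) = 0 by rewrite mulrBr mulr1 -expr2 -E subrr.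
move/eqP; rewrite mulf_eq0 subr_eq0 z3_neq1 orbF; exact/negP/z3_neq0.
Qed.

Lemma inv_z32 : (z3 ^+ 2)^-1 = z3.
Proof.
have h : z3 ^+ 2 != 0 by rewrite expf_neq0 // z3_neq0.
by rewrite -[RHS](mulKf h) -exprSr z3_3 mulr1.
Qed.

Lemma m1_neq1 : ((-1 : C) == 1) = false.
Proof.
apply/negbTE/eqP => E.
have : (2 : C) = 0.
  transitivity (1 - (-1) : C); first by ring.
  by rewrite E subrr.
by move/eqP; rewrite (negbTE two_neq0).
Qed.

Definition neqs := (z3_neq1, z32_neq1, z3_neq_z32, m1_neq1,
   (eq_sym 1 z3), (eq_sym 1 (z3 ^+ 2)), (eq_sym (z3 ^+ 2) z3), (eq_sym 1 (-1 : C))).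

Lemma cube_roots (x : C) : x ^+ 3 = 1 -> [\/ x = 1, x = z3 | x = z3 ^+ 2].
Proof.
move=> h.
have : (x - 1) * ((x - z3) * (x - z3 ^+ 2)) = 0.
  have -> : (x - 1) * ((x - z3) * (x - z3 ^+ 2)) =
      x ^+ 3 - 1 - (x ^+ 2 - x) * (z3 ^+ 2 + z3 + 1) + (z3 ^+ 3 - 1) * (x - 1) by ring.
  by rewrite h z3_3 zeta_eq !subrr mulr0 subr0 mul0r addr0.
move/eqP; rewrite !mulf_eq0 !subr_eq0 => /or3P[] /eqP; by [constructor 1|constructor 2|constructor 3].
Qed.

Lemma sq_roots (x : C) : x ^+ 2 = 1 -> x = 1 \/ x = -1.
Proof.
move=> h; have : (x - 1) * (x + 1) = 0.
  have -> : (x - 1) * (x + 1) = x ^+ 2 - 1 by ring.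
  by rewrite h subrr.
move/eqP; rewrite mulf_eq0 subr_eq0 addr_eq0 => /orP[] /eqP; by [left|right].
Qed.


Lemma pow2m (X : 'M[C]_2) : X ^+ 2 = X *m X.
Proof. by rewrite mulmxE expr2. Qed.
Lemma pow3m (X : 'M[C]_2) : X ^+ 3 = X *m (X *m X).
Proof. by rewrite !mulmxE !exprS expr0 mulr1. Qed.
Lemma one2 : (1 : 'M[C]_2) = mx2 1 0 0 1.
Proof. exact: mx2_1. Qed.

Lemma mx2_unit (a b c d : C) : a * d - b * c != 0 -> mx2 a b c d \in unitmx.
Proof. by rewrite unitmxE mx2_det unitfE. Qed.

Lemma invmxM2 (A B : 'M[C]_2) : A \in unitmx -> B \in unitmx ->
  invmx (A *m B) = invmx B *m invmx A.
Proof.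
move=> uA uB; have u : A *m B \in unitmx by rewrite unitmx_mul uA uB.
have e : (A *m B) *m (invmx B *m invmx A) = 1%:M.
  by rewrite mulmxA -(mulmxA A) mulmxV // mulmx1 mulmxV.
by rewrite -[RHS](mulKmx u) e mulmx1.
Qed.

Lemma iso_trans (rho s t : gen -> 'M[C]_2) :
  rep_iso rho s -> rep_iso s t -> rep_iso rho t.
Proof.
move=> [P [uP hP]] [Q [uQ hQ]]; exists (Q *m P); split; first by rewrite unitmx_mul uP uQ.
by move=> g; rewrite -mulmxA hP mulmxA hQ mulmxA.
Qed.

Lemma iso_decomp (rho s : gen -> 'M[C]_2) :
  rep_iso rho s -> decomposable s -> decomposable rho.
Proof.
move=> [P [uP hP]] [Q [uQ hQ]].
have uP' : invmx P \in unitmx by rewrite unitmx_inv.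
exists (invmx P *m Q); split; first by rewrite unitmx_mul uP' uQ.
move=> g; rewrite invmxM2 // invmxK.
have -> : invmx Q *m P *m rho g *m (invmx P *m Q) = invmx Q *m s g *m Q.
  by rewrite -!mulmxA (mulmxA P) hP -!mulmxA mulKVmx.
exact: hQ.
Qed.

Lemma iso_trivial (rho s : gen -> 'M[C]_2) :
  rep_iso rho s -> has_trivial s -> has_trivial rho.
Proof.
move=> [P [uP hP]] [v [nv hv]]; exists (invmx P *m v); split.
  apply: contra nv => /eqP h; apply/eqP.
  by rewrite -(mulKVmx uP v) h mulmx0.
move=> g.
have -> : rho g = invmx P *m s g *m P by rewrite -mulmxA -hP mulKmx.
by rewrite -!mulmxA mulKVmx // hv.
Qed.

Lemma diag2 (D : 'M[C]_2) : is_diag_mx D -> D = mx2 (D 0 0) 0 0 (D 1 1).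
Proof. by move/is_diag_mxP => h; rewrite {1}[D]mx2_eta (h 0 1) // (h 1 0). Qed.

Lemma conj_mul (P X Y : 'M[C]_2) : P \in unitmx ->
  (P *m X *m invmx P) *m (P *m Y *m invmx P) = P *m (X *m Y) *m invmx P.
Proof. by move=> uP; rewrite -!mulmxA (mulmxA (invmx P)) mulVmx // mul1mx. Qed.

Lemma decomp_comm (rho : gen -> 'M[C]_2) :
  decomposable rho -> forall g h, rho g *m rho h = rho h *m rho g.
Proof.
move=> [P [uP hP]] g h.
have E : forall k, rho k = P *m (invmx P *m rho k *m P) *m invmx P.
  by move=> k; rewrite -!mulmxA mulmxV // mulmx1 mulKVmx.
rewrite (E g) (E h); move: (hP g) (hP h).
generalize (invmx P *m rho g *m P) (invmx P *m rho h *m P) => A B dA dB.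
rewrite !conj_mul //; congr (_ *m _ *m _).
rewrite (diag2 dA) (diag2 dB) !mx2_mul.
by rewrite !mulr0 !mul0r !addr0 !add0r (mulrC (A 0 0)) (mulrC (A 1 1)).
Qed.

Lemma tri_comm (b e b' e' : C) :
  mx2 1 b 0 e *m mx2 1 b' 0 e' = mx2 1 b' 0 e' *m mx2 1 b 0 e -> b' + b * e' = b + b' * e.
Proof. by rewrite !mx2_mul !mul1r => /mx2_inj[_ h _ _]. Qed.

Lemma iso_rep2 (rho s : gen -> 'M[C]_2) :
  rep_iso rho s -> is_rep2 rho -> is_rep2 s.
Proof.
move=> [P [uP hP]] [h0 [h1 h2]].
have E : forall k, s k = P *m rho k *m invmx P by move=> k; rewrite hP mulmxK.
have one : P *m 1%:M *m invmx P = 1%:M by rewrite mulmx1 mulmxV.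
rewrite /is_rep2 !pow2m pow3m !E !conj_mul // -!pow2m -pow3m h0 h1 h2.
by [].
Qed.

Lemma cV2_eq (u w : 'cV[C]_2) : u 0 0 = w 0 0 -> u 1 0 = w 1 0 -> u = w.
Proof.
move=> h0 h1; apply/matrixP => i j; rewrite ord1.
case: i => [[|[|i]] Hi] //=.
  by rewrite (_ : Ordinal Hi = 0) //; exact/val_inj.
by rewrite (_ : Ordinal Hi = 1) //; exact/val_inj.
Qed.

Lemma col0E (M : 'M[C]_2) i : (col 0 M) i 0 = M i 0.
Proof. by rewrite mxE. Qed.

Lemma normal_form (rho : gen -> 'M[C]_2) : has_trivial rho ->
  exists b e : gen -> C, rep_iso rho (fun g => mx2 1 (b g) 0 (e g)).
Proof.
move=> [v [nv hv]].
have [Q [uQ cQ]] : exists Q : 'M[C]_2, Q \in unitmx /\ col 0 Q = v.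
  case: (eqVneq (v 0 0) 0) => h0.
  - have h1 : v 1 0 != 0.
      apply: contra nv => /eqP h1; apply/eqP/cV2_eq; by rewrite mxE.
    exists (mx2 0 1 (v 1 0) 0); split.
      by apply: mx2_unit; rewrite mul0r mul1r sub0r oppr_eq0.
    by apply/cV2_eq; rewrite !mxE.
  - exists (mx2 (v 0 0) 0 (v 1 0) 1); split.
      by apply: mx2_unit; rewrite mulr1 mul0r subr0.
    by apply/cV2_eq; rewrite !mxE.
have hc : forall g, col 0 (invmx Q *m rho g *m Q) = col 0 (1%:M : 'M[C]_2).
  move=> g; rewrite !colE -!mulmxA -colE cQ hv.
  by rewrite -cQ colE mulmxA mulVmx // mul1mx.
exists (fun g => (invmx Q *m rho g *m Q) 0 1), (fun g => (invmx Q *m rho g *m Q) 1 1).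
exists (invmx Q); split; first by rewrite unitmx_inv.
move=> g.
have hs : invmx Q *m rho g *m Q =
   mx2 1 ((invmx Q *m rho g *m Q) 0 1) 0 ((invmx Q *m rho g *m Q) 1 1).
  have h00 := congr1 (fun M : 'cV[C]_2 => M 0 0) (hc g).
  have h10 := congr1 (fun M : 'cV[C]_2 => M 1 0) (hc g).
  have i00 : (1%:M : 'M[C]_2) 0 0 = 1 by rewrite mxE.
  have i10 : (1%:M : 'M[C]_2) 1 0 = 0 by rewrite mxE.
  move: h00 h10; rewrite /= !col0E i00 i10 => h00 h10.
  by rewrite {1}[invmx Q *m rho g *m Q]mx2_eta h00 h10.
by rewrite -hs mulmxK.
Qed.

Lemma eq_via (x y z : C) : z = 0 -> x - y = z -> x = y.
Proof. by move=> -> /eqP; rewrite subr_eq0 => /eqP. Qed.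

Lemma to0 (x y t : C) : x = y -> t = x - y -> t = 0.
Proof. by move=> -> ->; rewrite subrr. Qed.

Lemma eq_from (x y u v : C) : u = v -> x - y = u - v -> x = y.
Proof. by move=> -> /eqP; rewrite subrr subr_eq0 => /eqP. Qed.

Lemma tri_rels (b e : gen -> C) : is_rep2 (fun g => mx2 1 (b g) 0 (e g)) ->
  [/\ e S0 ^+ 2 = 1, b S0 * (1 + e S0) = 0, e S1 ^+ 2 = 1, b S1 * (1 + e S1) = 0 &
      e R2 ^+ 3 = 1 /\ b R2 * (1 + e R2 + e R2 ^+ 2) = 0].
Proof.
rewrite /is_rep2 !pow2m pow3m !mx2_mul one2 /=.
move=> [/mx2_inj[_ h0 _ h0'] [/mx2_inj[_ h1 _ h1'] /mx2_inj[_ h2 _ h2']]].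
split.
- by apply: (eq_from h0'); ring.
- by apply: (eq_from h0); ring.
- by apply: (eq_from h1'); ring.
- by apply: (eq_from h1); ring.
- by split; [apply: (eq_from h2') | apply: (eq_from h2)]; ring.
Qed.

Lemma diag_mx2 (a d : C) : is_diag_mx (mx2 a 0 0 d).
Proof.
apply/is_diag_mxP => i j; case: i => [[|[|i]] ?]; case: j => [[|[|j]] ?]; by rewrite // !mxE.
Qed.

Lemma tri_iso (b e b' e' p q r : C) : e = e' -> p * b + q * (e - 1) = r * b' ->
  mx2 p q 0 r *m mx2 1 b 0 e = mx2 1 b' 0 e' *m mx2 p q 0 r.
Proof.
move=> <- h; rewrite !mx2_mul; congr mx2; try ring.
by apply: (eq_via (z := p * b + q * (e - 1) - r * b')); [rewrite h subrr | ring].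
Qed.

Lemma tri_split (b e : gen -> C) (c : C) : (forall g, b g + c * (e g - 1) = 0) ->
  decomposable (fun g => mx2 1 (b g) 0 (e g)).
Proof.
move=> h.
have uP : mx2 1 c 0 1 \in unitmx by apply: mx2_unit; rewrite mulr1 mulr0 subr0 oner_neq0.
exists (invmx (mx2 1 c 0 1)); split; first by rewrite unitmx_inv.
move=> g; rewrite invmxK.
rewrite (tri_iso (b' := 0) (e' := e g) (erefl _)); last by rewrite mul1r mulr0 h.
by rewrite -mulmxA mulmxV // mulmx1 diag_mx2.
Qed.

Lemma tri_rep_iso (b e : gen -> C) (L : gen -> 'M[C]_2) (p q r : C) :
  p * r != 0 ->
  (forall g, exists b' e', L g = mx2 1 b' 0 e' /\ e g = e' /\ p * b g + q * (e g - 1) = r * b') ->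
  rep_iso (fun g => mx2 1 (b g) 0 (e g)) L.
Proof.
move=> pr h; exists (mx2 p q 0 r); split.
  by apply: mx2_unit; rewrite mulr0 subr0.
move=> g; have [b' [e' [-> [E H]]]] := h g; exact: tri_iso.
Qed.

Definition nsplit (b e : gen -> C) := forall c, ~ (forall g, b g + c * (e g - 1) = 0).

Ltac tri_goal := case => /=; do 2 eexists; (split; first reflexivity); split.

Lemma case_ext2 (b e : gen -> C) a :
  e S0 = -1 -> e S1 = -1 -> e R2 = z3 ^+ a -> z3 ^+ a != 1 -> nsplit b e ->
  exists o, rep_iso (fun g => mx2 1 (b g) 0 (e g)) (listed (Ext2 a o)).
Proof.
move=> E0 E1 E2 w1 ns.
have wn : z3 ^+ a - 1 != 0 by rewrite subr_eq0.
pose q := - b R2 / (z3 ^+ a - 1).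
have hR : b R2 + q * (z3 ^+ a - 1) = 0 by rewrite /q; field.
case: (eqVneq (b S0 - 2 * q) 0) => d0.
- case: (eqVneq (b S1 - 2 * q) 0) => d1.
  + exfalso; apply: (ns q); case; rewrite ?E0 ?E1 ?E2 //.
    * by apply: (eq_from d0); ring.
    * by apply: (eq_from d1); ring.
  + exists None; apply: (@tri_rep_iso _ _ _ 1 q (b S1 - 2 * q)); first by rewrite mul1r.
    tri_goal; rewrite ?E0 ?E1 ?E2 //.
    * by apply: (eq_from d0); ring.
    * by ring.
    * by apply: (eq_from hR); ring.
- exists (Some ((b S1 - 2 * q) / (b S0 - 2 * q))).
  apply: (@tri_rep_iso _ _ _ 1 q (b S0 - 2 * q)); first by rewrite mul1r.
  tri_goal; rewrite ?E0 ?E1 ?E2 //.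
  * by ring.
  * by field.
  * by apply: (eq_from hR); ring.
Qed.

Lemma case_ext3 (b e : gen -> C) a :
  e S0 = -1 -> e S1 = 1 -> b S1 = 0 -> e R2 = z3 ^+ a -> z3 ^+ a != 1 -> nsplit b e ->
  rep_iso (fun g => mx2 1 (b g) 0 (e g)) (listed (@Ext3 R a)).
Proof.
move=> E0 E1 B1 E2 w1 ns.
have wn : z3 ^+ a - 1 != 0 by rewrite subr_eq0.
pose q := - b R2 / (z3 ^+ a - 1).
have hR : b R2 + q * (z3 ^+ a - 1) = 0 by rewrite /q; field.
case: (eqVneq (b S0 - 2 * q) 0) => d0.
- exfalso; apply: (ns q); case; rewrite ?E0 ?E1 ?E2 ?B1 //.
  * by apply: (eq_from d0); ring.
  * by ring.
- apply: (@tri_rep_iso _ _ _ 1 q (b S0 - 2 * q)); first by rewrite mul1r.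
  tri_goal; rewrite ?E0 ?E1 ?E2 ?B1 //.
  * by ring.
  * by ring.
  * by apply: (eq_from hR); ring.
Qed.

Lemma case_ext4 (b e : gen -> C) a :
  e S0 = 1 -> e S1 = -1 -> b S0 = 0 -> e R2 = z3 ^+ a -> z3 ^+ a != 1 -> nsplit b e ->
  rep_iso (fun g => mx2 1 (b g) 0 (e g)) (listed (@Ext4 R a)).
Proof.
move=> E0 E1 B0 E2 w1 ns.
have wn : z3 ^+ a - 1 != 0 by rewrite subr_eq0.
pose q := - b R2 / (z3 ^+ a - 1).
have hR : b R2 + q * (z3 ^+ a - 1) = 0 by rewrite /q; field.
case: (eqVneq (b S1 - 2 * q) 0) => d1.
- exfalso; apply: (ns q); case; rewrite ?E0 ?E1 ?E2 ?B0 //.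
  * by ring.
  * by apply: (eq_from d1); ring.
- apply: (@tri_rep_iso _ _ _ 1 q (b S1 - 2 * q)); first by rewrite mul1r.
  tri_goal; rewrite ?E0 ?E1 ?E2 ?B0 //.
  * by ring.
  * by ring.
  * by apply: (eq_from hR); ring.
Qed.

Lemma case_ext1 (b e : gen -> C) :
  e S0 = -1 -> e S1 = -1 -> e R2 = 1 -> b R2 = 0 -> nsplit b e ->
  rep_iso (fun g => mx2 1 (b g) 0 (e g)) (listed (@Ext1 R)).
Proof.
move=> E0 E1 E2 B2 ns.
pose q := b S1 / 2.
case: (eqVneq (b S0 - b S1) 0) => d.
- exfalso; apply: (ns q); case; rewrite ?E0 ?E1 ?E2 ?B2 /q //.
  * by apply: (eq_from d); field.
  * by field.
  * by ring.
- apply: (@tri_rep_iso _ _ _ 1 q (b S0 - b S1)); first by rewrite mul1r.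
  tri_goal; rewrite ?E0 ?E1 ?E2 ?B2 /q //.
  * by field.
  * by field.
  * by ring.
Qed.

Lemma zero_of (x y : C) : y != 0 -> x * y = 0 -> x = 0.
Proof. by move=> ny /eqP; rewrite mulf_eq0 (negbTE ny) orbF => /eqP. Qed.

Lemma two_ne : (1 + 1 : C) != 0.
Proof. by rewrite (_ : 1 + 1 = 2) ?two_neq0 //; ring. Qed.
Lemma three_ne : (1 + 1 + 1 ^+ 2 : C) != 0.
Proof. by rewrite (_ : 1 + 1 + 1 ^+ 2 = 3) ?three_neq0 //; ring. Qed.

Lemma classify (b e : gen -> C) :
  is_rep2 (fun g => mx2 1 (b g) 0 (e g)) -> nsplit b e ->
  exists i, valid_idx i /\ rep_iso (fun g => mx2 1 (b g) 0 (e g)) (listed i).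
Proof.
move=> /tri_rels[h0 k0 h1 k1 [h2 k2]] ns.
have z1 : z3 ^+ 1 != 1 by rewrite expr1 z3_neq1.
have z5 : z3 ^+ 5 != 1 by rewrite z3_5 z32_neq1.
have z2 : z3 ^+ 2 != 1 by rewrite z32_neq1.
have z4 : z3 ^+ 4 != 1 by rewrite z3_4 z3_neq1.
have zn : z3 - 1 != 0 by rewrite subr_eq0 z3_neq1.
have z2n : z3 ^+ 2 - 1 != 0 by rewrite subr_eq0 z32_neq1.
have B0 : e S0 = 1 -> b S0 = 0 by move=> E; apply: (zero_of two_ne); move: k0; rewrite E.
have B1 : e S1 = 1 -> b S1 = 0 by move=> E; apply: (zero_of two_ne); move: k1; rewrite E.
have B2 : e R2 = 1 -> b R2 = 0 by move=> E; apply: (zero_of three_ne); move: k2; rewrite E.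
have [E0|E0] := sq_roots h0; have [E1|E1] := sq_roots h1;
  have [E2|E2|E2] := cube_roots h2.
-
  exfalso; apply: (ns 0); case; rewrite ?E0 ?E1 ?E2 ?(B0 E0) ?(B1 E1) ?(B2 E2) //; by ring.
- exfalso; apply: (ns (- b R2 / (z3 - 1))); case; rewrite ?E0 ?E1 ?E2 ?(B0 E0) ?(B1 E1) //; by field.
- exfalso; apply: (ns (- b R2 / (z3 ^+ 2 - 1))); case; rewrite ?E0 ?E1 ?E2 ?(B0 E0) ?(B1 E1) //; by field.
- exfalso; apply: (ns (b S1 / 2)); case; rewrite ?E0 ?E1 ?E2 ?(B0 E0) ?(B2 E2) //; by field.
- exists (@Ext4 R 1); split; first by left.
  by apply: case_ext4; rewrite ?expr1 ?(B0 E0).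
- exists (@Ext4 R 5); split; first by right.
  by apply: case_ext4; rewrite ?z3_5 ?(B0 E0).
- exfalso; apply: (ns (b S0 / 2)); case; rewrite ?E0 ?E1 ?E2 ?(B1 E1) ?(B2 E2) //; by field.
- exists (@Ext3 R 4); split; first by right.
  by apply: case_ext3; rewrite ?z3_4 ?(B1 E1).
- exists (@Ext3 R 2); split; first by left.
  by apply: case_ext3; rewrite ?(B1 E1).
- exists (@Ext1 R); split; first by [].
  by apply: case_ext1; rewrite ?(B2 E2).
- have [o ho] : exists o, rep_iso (fun g => mx2 1 (b g) 0 (e g)) (listed (Ext2 1 o)).
    by apply: case_ext2; rewrite ?expr1.
  by exists (Ext2 1 o); split; first by left.
- have [o ho] : exists o, rep_iso (fun g => mx2 1 (b g) 0 (e g)) (listed (Ext2 5 o)).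
    by apply: case_ext2; rewrite ?z3_5.
  by exists (Ext2 5 o); split; first by right.
Qed.

Lemma m00 (a b c d : C) : mx2 a b c d 0 0 = a. Proof. by rewrite mxE. Qed.
Lemma m01 (a b c d : C) : mx2 a b c d 0 1 = b. Proof. by rewrite mxE. Qed.
Lemma m10 (a b c d : C) : mx2 a b c d 1 0 = c. Proof. by rewrite mxE. Qed.
Lemma m11 (a b c d : C) : mx2 a b c d 1 1 = d. Proof. by rewrite mxE. Qed.
Definition mE := (m00, m01, m10, m11).

Lemma tri_sq (b e : C) : e ^+ 2 = 1 -> b * (1 + e) = 0 -> (mx2 1 b 0 e) ^+ 2 = 1.
Proof.
move=> h k; rewrite pow2m mx2_mul one2; congr mx2; try by ring.
  by apply: (eq_from k); ring.
by apply: (eq_from h); ring.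
Qed.

Lemma diag_cube (w : C) : w ^+ 3 = 1 -> (mx2 1 0 0 w) ^+ 3 = 1.
Proof.
move=> h; rewrite pow3m !mx2_mul one2; congr mx2; try by ring.
by apply: (eq_from h); ring.
Qed.

Lemma z3a_cube a : (z3 ^+ a) ^+ 3 = 1.
Proof. by rewrite -exprM mulnC exprM z3_3 expr1n. Qed.

Lemma chiE : [/\ chi R S0 = -1, chi R S1 = -1 & chi R R2 = z3 ^+ 2].
Proof. by rewrite /chi /= expr1n !mulr1 !mul1r. Qed.

Lemma listed_ok (i : ext_idx R) : valid_idx i ->
  is_rep2 (listed i) /\
  forall g, listed i g 0 0 = 1 /\ listed i g 1 0 = 0 /\ listed i g 1 1 = quot_char i g.
Proof.
have s1 : (-1 : C) ^+ 2 = 1 by ring.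
have s0 : (1 : C) ^+ 2 = 1 by ring.
have [c0 c1 c2] := chiE.
have c3 : (z3 ^+ 2) ^+ 3 = 1 by rewrite -exprM mulnC exprM z3_3 expr1n.
case: i => [|a [z|]|a|a] /= v; split;
  try (rewrite /is_rep2 /=; split; [apply: tri_sq; by ring | split; [apply: tri_sq; by ring | apply: diag_cube; by rewrite ?z3a_cube ?expr1n]]);
  (case; rewrite /= !mE; (split; [done | split; [done | ]]));
  rewrite ?c0 ?c1 ?c2 ?invrN1 ?inv_z32 ?c3 ?mul1r //;
  first [by ring | case: v => ->; by ring].
Qed.


Definition e1 : 'cV[C]_2 := \col_(i < 2) (if i == 0 then 1 else 0).

Lemma tri_fix (b e : C) : mx2 1 b 0 e *m e1 = e1.
Proof.
apply: cV2_eq; rewrite !mxE !big_ord_recr big_ord0 /= !mxE /=; by ring.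
Qed.

Lemma e1_neq0 : e1 != 0.
Proof. apply/eqP => /(congr1 (fun v : 'cV[C]_2 => v 0 0)); rewrite !mxE /=; exact/eqP/oner_neq0. Qed.

Lemma listed_trivial (i : ext_idx R) : has_trivial (listed i).
Proof.
exists e1; split; first exact: e1_neq0.
by case: i => [|a [z|]|a|a]; case => /=; rewrite tri_fix.
Qed.

Lemma listed_indec (i : ext_idx R) : valid_idx i -> indecomposable (listed i).
Proof.
move=> v D; have c := decomp_comm D.
have w1 : forall a, (a = 1 \/ a = 5)%N -> z3 ^+ a = 1 -> False.
  by move=> a [] -> /eqP; rewrite ?expr1 ?z3_5 neqs.
have w2 : forall a, (a = 2 \/ a = 4)%N -> z3 ^+ a = 1 -> False.
  by move=> a [] -> /eqP; rewrite ?z3_4 neqs.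
clear D; case: i v c => [|a [z|]|a|a] /= v c.
- have := tri_comm (c S0 S1); rewrite ?mul0r ?mulr0 ?addr0 ?add0r ?mul1r => /eqP.
  by rewrite neqs.
- have := tri_comm (c S0 R2); rewrite ?mul0r ?addr0 ?add0r ?mul1r; exact: w1.
- have := tri_comm (c S1 R2); rewrite ?mul0r ?addr0 ?add0r ?mul1r; exact: w1.
- have := tri_comm (c S0 R2); rewrite ?mul0r ?addr0 ?add0r ?mul1r; exact: w2.
- have := tri_comm (c S1 R2); rewrite ?mul0r ?addr0 ?add0r ?mul1r; exact: w1.
Qed.

Lemma tri_eqs (p q s r b e b' e' : C) :
  mx2 p q s r *m mx2 1 b 0 e = mx2 1 b' 0 e' *m mx2 p q s r ->
  [/\ s = e' * s, p * b + q * (e - 1) = r * b' & s * b + r * e = e' * r].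
Proof.
rewrite !mx2_mul => /mx2_inj[_ h01 h10 h11]; split.
- by apply: (eq_from h10); ring.
- by apply: (eq_from h01); ring.
- by apply: (eq_from h11); ring.
Qed.

Lemma listed_shape (i : ext_idx R) g :
  listed i g = mx2 1 (listed i g 0 1) 0 (listed i g 1 1).
Proof. by case: i => [|a [z|]|a|a]; case: g => /=; rewrite !mE. Qed.

Lemma listed_m1 (i : ext_idx R) : exists g, listed i g 1 1 = -1.
Proof.
by case: i => [|a [z|]|a|a]; [exists S0|exists S0|exists S0|exists S0|exists S1]; rewrite /= mE.
Qed.

Lemma iso_inv (i j : ext_idx R) : rep_iso (listed i) (listed j) ->
  exists p q r : C, p * r != 0 /\ forall g, listed i g 1 1 = listed j g 1 1 /\
    p * listed i g 0 1 + q * (listed i g 1 1 - 1) = r * listed j g 0 1.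
Proof.
move=> [P [uP hP]].
have hg : forall g, [/\ P 1 0 = listed j g 1 1 * P 1 0,
    P 0 0 * listed i g 0 1 + P 0 1 * (listed i g 1 1 - 1) = P 1 1 * listed j g 0 1 &
    P 1 0 * listed i g 0 1 + P 1 1 * listed i g 1 1 = listed j g 1 1 * P 1 1].
  move=> g; have := hP g.
  rewrite {1}(listed_shape i g) {1}(listed_shape j g) [P]mx2_eta; by move/tri_eqs; rewrite !mE.
have s0 : P 1 0 = 0.
  have [g0 hg0] := listed_m1 j; have [h _ _] := hg g0; move: h; rewrite hg0 => h.
  apply: (zero_of two_ne); apply: (eq_from h); ring.
have pr : P 0 0 * P 1 1 != 0.
  by move: uP; rewrite [P]mx2_eta unitmxE mx2_det unitfE !mE s0 mulr0 subr0.
have rn : P 1 1 != 0 by move: pr; rewrite mulf_eq0 negb_or => /andP[].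
exists (P 0 0), (P 0 1), (P 1 1); split => // g.
have [_ h2 h3] := hg g; split => //.
move: h3; rewrite s0 mul0r add0r mulrC; exact: (mulIf rn).
Qed.

Lemma ext2_eq a (o o' : option C) (p q r : C) : z3 ^+ a != 1 -> p * r != 0 ->
  (forall g, listed (Ext2 a o) g 1 1 = listed (Ext2 a o') g 1 1 /\
    p * listed (Ext2 a o) g 0 1 + q * (listed (Ext2 a o) g 1 1 - 1) =
    r * listed (Ext2 a o') g 0 1) -> o = o'.
Proof.
move=> w1 pr H.
have [pn rn] : p != 0 /\ r != 0 by move: pr; rewrite mulf_eq0 negb_or => /andP[].
have wn : z3 ^+ a - 1 != 0 by rewrite subr_eq0.
case: o H => [z|] H; case: o' H => [z'|] H;
  have [_ f0] := H S0; have [_ f1] := H S1; have [_ f2] := H R2;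
  move: f0 f1 f2; rewrite /= !mE => f0 f1 f2;
  (have q0 : q = 0 by apply: (zero_of wn); apply: (eq_from f2); ring);
  move: f0 f1; rewrite q0 => f0 f1.
- have e : p = r by apply: (eq_from f0); ring.
  congr Some; apply: (mulfI pn); apply: (eq_from f1); rewrite e; ring.
- by exfalso; move/eqP: pn; apply; apply: (eq_from f0); ring.
- by exfalso; move/eqP: rn; apply; apply: (eq_from (esym f0)); ring.
- by [].
Qed.

Lemma noniso (i j : ext_idx R) : valid_idx i -> valid_idx j ->
  rep_iso (listed i) (listed j) -> i = j.
Proof.
move=> vi vj /iso_inv [p [q [r [pr H]]]].
case: i vi H => [|a [z|]|a|a] vi H; case: j vj H => [|a' [z'|]|a' |a'] vj H;
  simpl in vi, vj;
  repeat match goal with h : (_ = _)%N \/ (_ = _)%N |- _ => case: h => ?; subst end;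
  move: (H S0) (H S1) (H R2); rewrite /= !mE;
  rewrite ?expr1 ?z3_4 ?z3_5;
  move=> [e0 _] [e1 _] [e2 _];
  try (by move/eqP: e0; rewrite ?neqs);
  try (by move/eqP: e1; rewrite ?neqs);
  try (by move/eqP: e2; rewrite ?neqs).
all: try done.
all: congr Ext2; apply: (ext2_eq _ pr H); by rewrite ?expr1 ?z3_5 neqs.
Qed.

Lemma iso_sym (rho s : gen -> 'M[C]_2) : rep_iso rho s -> rep_iso s rho.
Proof.
move=> [P [uP hP]]; exists (invmx P); split; first by rewrite unitmx_inv.
by move=> g; rewrite -[RHS](mulKmx uP) (mulmxA P) hP mulmxK.
Qed.
End Basics.

Unset Implicit Arguments.

Theorem proposition6p3 (R : realType) :
  (* each listed matrix triple is a representation of G which is an extension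
     0 -> 1 -> rho -> phi -> 0 (first basis vector trivial) of the stated phi *)
  (forall i : ext_idx R, valid_idx i ->
     is_rep2 (listed i) /\
     forall g, listed i g ord0 ord0 = 1 /\ listed i g 1 0 = 0 /\
               listed i g 1 1 = quot_char i g) /\
  (* classification: indecomposable rank-2 reps containing the trivial rep
     are, up to isomorphism, exactly the listed ones *)
  (forall rho : gen -> 'M[R[i]]_2, is_rep2 rho ->
     (has_trivial rho /\ indecomposable rho) <->
     exists i : ext_idx R, valid_idx i /\ rep_iso rho (listed i)) /\
  (* the listed representations are pairwise nonisomorphic *)
  (forall i j : ext_idx R, valid_idx i -> valid_idx j ->
     rep_iso (listed i) (listed j) -> i = j).
Proof.
split; first by move=> i v; exact: listed_ok v.
split; last by move=> i j; exact: noniso.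
move=> rho rep; split.
- move=> [ht nd]; have [b [e hi]] := normal_form ht.
  have rep' := iso_rep2 hi rep.
  have ns : nsplit b e.
    by move=> c hc; apply: nd; apply: (iso_decomp hi); exact: tri_split hc.
  have [i [vi hi2]] := classify rep' ns.
  by exists i; split => //; exact: iso_trans hi hi2.
- move=> [i [vi hi]]; split; first exact: iso_trivial hi (listed_trivial i).
  move=> D; apply: (listed_indec vi); exact: iso_decomp (iso_sym hi) D.
Qed.
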